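(* Let $S\subseteq(0,1)$ be open, $f:S\to(0,1)$ differentiable, and consider a (possibly randomized) Bernoulli factory for $f$ that is fast. For $n\in\mathbb N$ let $\varphi_{n,1}(p)=\Pr[N=n,\ Y=1]$ when the inputs have parameter $p$. Then each $\varphi_{n,1}$ is differentiable on $S$ and the series $\sum_{n=1}^\infty \partial\varphi_{n,1}(p)/\partial p$ converges uniformly on every closed interval $[\zeta,\eta]\subseteq S$.
   Context: Let $X=(X_i)$ be i.i.d. Bernoulli with parameter $p\in S$ and $U=(U_i)$ i.i.d. uniform on $(0,1)$, independent of $X$. A (possibly randomized) Bernoulli factory for $f$ consists of measurable stopping functions $\tau_i(x_1,u_1;\dots;x_i,u_i)\in\{0,1\}$ and measurable output functions $\gamma_n(x_1,u_1;\dots;x_n,u_n)\in\{0,1\}$; $N=\min\{i:\tau_i(X_1,U_1;\dots;X_i,U_i)=1\}$ is assumed finite almost surely, and the output $Y=\gamma_N(X_1,U_1;\dots;X_N,U_N)$ satisfies $\Pr[Y=1]=f(p)$ for all $p\in S$. The factory is fast if for every $p\in S$ there exist $A>0$, $\beta<1$ with $\Pr[N>n]\le A\beta^n$ for all $n$. *)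

(* Defs.v *)
From Stdlib Require Import Reals Lra Lia Classical ClassicalEpsilon.
Open Scope R_scope.

(** Infimum of a set of reals (0 if the set is empty or unbounded below). *)
Definition Rinf (E : R -> Prop) : R :=
  match excluded_middle_informative
          (bound (fun y => E (- y)) /\ exists y, E (- y)) with
  | left H => - proj1_sig (completeness _ (proj1 H) (proj2 H))
  | right _ => 0
  end.

Fixpoint prodR (n : nat) (g : nat -> R) : R :=
  match n with O => 1 | Datatypes.S m => prodR m g * g m end.

(** Points of R^n are represented by u : nat -> R, only u 0 .. u (n-1) matter. *)
Definition in_unit_cube (n : nat) (u : nat -> R) : Prop :=
  forall i, (i < n)%nat -> 0 < u i < 1.

Definition box_vol (n : nat) (a b : nat -> R) : R := prodR n (fun i => b i - a i).

(** Values of sum of volumes of countable covers by closed boxes of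
    A ∩ (0,1)^n  (used k-th box iff c k = true). *)
Definition cover_values (n : nat) (A : (nat -> R) -> Prop) : R -> Prop :=
  fun s => exists (c : nat -> bool) (a b : nat -> nat -> R),
    (forall k i, a k i <= b k i) /\
    (forall u, in_unit_cube n u -> A u ->
       exists k, c k = true /\ forall i, (i < n)%nat -> a k i <= u i <= b k i) /\
    Un_cv (sum_f_R0 (fun k => if c k then box_vol n (a k) (b k) else 0)) s.

(** Lebesgue (outer) measure of A ∩ (0,1)^n, i.e. the law of (U_1,..,U_n). *)
Definition leb_measure (n : nat) (A : (nat -> R) -> Prop) : R :=
  Rinf (cover_values n A).

(** Borel subsets of R^n (as sets depending on the first n coordinates). *)
Inductive borel (n : nat) : ((nat -> R) -> Prop) -> Prop :=
| borel_box (a b : nat -> R) :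
    borel n (fun u => forall i, (i < n)%nat -> a i < u i < b i)
| borel_compl A : borel n A -> borel n (fun u => ~ A u)
| borel_union (F : nat -> (nat -> R) -> Prop) :
    (forall k, borel n (F k)) -> borel n (fun u => exists k, F k u)
| borel_ext A B : borel n A -> (forall u, A u <-> B u) -> borel n B.

(** A randomized factory: tau i x u (i >= 1) is the stopping function
    tau_i(x_1,u_1;...;x_i,u_i) and gamma n x u the output function
    gamma_n(x_1,u_1;...;x_n,u_n), where x_j = x (j-1), u_j = u (j-1). *)
Definition causal (g : nat -> (nat -> bool) -> (nat -> R) -> bool) : Prop :=
  forall i x x' u u', (forall j, (j < i)%nat -> x j = x' j /\ u j = u' j) ->
    g i x u = g i x' u'.

Definition measurable_fam (g : nat -> (nat -> bool) -> (nat -> R) -> bool) : Prop :=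
  forall i x, borel i (fun u => g i x u = true).

Definition weight (n : nat) (x : nat -> bool) (p : R) : R :=
  prodR n (fun i => if x i then p else 1 - p).

Definition bits (k : nat) : nat -> bool := fun i => Nat.testbit k i.

Definition sum_bits (n : nat) (F : (nat -> bool) -> R) : R :=
  sum_f_R0 (fun k => F (bits k)) (Nat.pow 2 n - 1).

(** Pr[E] for an event E determined by (X_1,U_1,...,X_n,U_n). *)
Definition prob (n : nat) (p : R) (E : (nat -> bool) -> (nat -> R) -> Prop) : R :=
  sum_bits n (fun x => weight n x p * leb_measure n (E x)).

Definition stops_at (tau : nat -> (nat -> bool) -> (nat -> R) -> bool)
  (n : nat) (x : nat -> bool) (u : nat -> R) : Prop :=
  (forall j, (1 <= j < n)%nat -> tau j x u = false) /\ tau n x u = true.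

Definition phi (tau gamma : nat -> (nat -> bool) -> (nat -> R) -> bool)
  (n : nat) (p : R) : R :=
  prob n p (fun x u => stops_at tau n x u /\ gamma n x u = true).

Definition tail (tau : nat -> (nat -> bool) -> (nat -> R) -> bool) (n : nat) (p : R) : R :=
  prob n p (fun x u => forall j, (1 <= j <= n)%nat -> tau j x u = false).

Definition bernoulli_factory (S : R -> Prop) (f : R -> R)
  (tau gamma : nat -> (nat -> bool) -> (nat -> R) -> bool) : Prop :=
  causal tau /\ causal gamma /\ measurable_fam tau /\ measurable_fam gamma /\
  (* N finite almost surely *)
  (forall p, S p -> Un_cv (fun n => tail tau n p) 0) /\
  (* Pr[Y = 1] = sum_{n>=1} Pr[N = n, Y = 1] = f p *)
  (forall p, S p -> Un_cv (sum_f_R0 (fun n => phi tau gamma (Datatypes.S n) p)) (f p)).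

Definition fast (S : R -> Prop) (tau : nat -> (nat -> bool) -> (nat -> R) -> bool) : Prop :=
  forall p, S p -> exists A beta, A > 0 /\ beta < 1 /\
    forall n, tail tau n p <= A * beta ^ n.

(* Main.v *)
Require Import Defs.
From Stdlib Require Import Reals Lra Lia Classical ClassicalEpsilon.
From Stdlib Require List.
Open Scope R_scope.

Lemma prodR_ext n g h : (forall i, (i < n)%nat -> g i = h i) -> prodR n g = prodR n h.
Proof.
  induction n; intros H; simpl; auto.
  rewrite IHn by (intros; apply H; lia). rewrite (H n) by lia. reflexivity.
Qed.

Lemma prodR_nonneg n g : (forall i, (i < n)%nat -> 0 <= g i) -> 0 <= prodR n g.
Proof.
  induction n; intros H; simpl; [lra|].
  apply Rmult_le_pos; [apply IHn; intros; apply H; lia | apply H; lia].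
Qed.

Lemma prodR_one n : prodR n (fun _ => 1) = 1.
Proof. induction n; simpl; [auto| rewrite IHn; ring]. Qed.

Lemma weight_pos n x p : 0 < p < 1 -> 0 < weight n x p.
Proof.
  intros Hp; unfold weight; induction n; simpl; [lra|].
  apply Rmult_lt_0_compat; auto. destruct (x n); lra.
Qed.

Lemma weight_nonneg n x p : 0 < p < 1 -> 0 <= weight n x p.
Proof. intros; apply Rlt_le, weight_pos; auto. Qed.

Fixpoint dweight (n : nat) (x : nat -> bool) (p : R) : R :=
  match n with
  | O => 0
  | S m => dweight m x p * (if x m then p else 1 - p) + weight m x p * (if x m then 1 else -1)
  end.

Lemma derivable_pt_lim_ext f g x l : (forall y, f y = g y) -> derivable_pt_lim f x l -> derivable_pt_lim g x l.
Proof.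
  intros E H eps He. destruct (H eps He) as [d Hd]. exists d. intros h h0 hd.
  rewrite <- !E. apply Hd; auto.
Qed.

Lemma weight_S n x p : weight (S n) x p = weight n x p * (if x n then p else 1 - p).
Proof. reflexivity. Qed.

Lemma dweight_lim n x p : derivable_pt_lim (weight n x) p (dweight n x p).
Proof.
  induction n; simpl.
  - apply derivable_pt_lim_ext with (f := fct_cte 1). intros; reflexivity.
    apply derivable_pt_lim_const.
  - apply derivable_pt_lim_ext with (f := mult_fct (weight n x) (fun p => if x n then p else 1 - p)).
    { intros; reflexivity. }
    apply derivable_pt_lim_mult; auto.
    destruct (x n).
    + apply derivable_pt_lim_id.
    + replace (-1) with (0 - 1) by ring.
      apply derivable_pt_lim_ext with (f := minus_fct (fct_cte 1) id). intros; reflexivity.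
      apply derivable_pt_lim_minus; [apply derivable_pt_lim_const | apply derivable_pt_lim_id].
Qed.

Lemma dweight_bound n x p : 0 < p < 1 ->
  Rabs (dweight n x p) <= INR n / (p * (1 - p)) * weight n x p.
Proof.
  intros Hp. assert (Hq : 0 < p * (1 - p)) by nra.
  induction n.
  - simpl. rewrite Rabs_R0. unfold Rdiv. simpl. lra.
  - simpl dweight. rewrite weight_S, S_INR.
    pose proof (weight_pos n x p Hp) as Hw.
    assert (Hp1 : 1 <= / (p * (1 - p)) * (if x n then p else 1 - p)).
    { destruct (x n).
      - apply (Rmult_le_reg_l (p*(1-p))); auto. field_simplify; nra.
      - apply (Rmult_le_reg_l (p*(1-p))); auto. field_simplify; nra. }
    assert (Hg : 0 < (if x n then p else 1 - p)) by (destruct (x n); lra).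
    eapply Rle_trans; [apply Rabs_triang|].
    rewrite !Rabs_mult.
    rewrite (Rabs_pos_eq (if x n then p else 1 - p)) by lra.
    rewrite (Rabs_pos_eq (weight n x p)) by lra.
    assert (Rabs (if x n then 1 else -1) = 1) as -> by (destruct (x n); unfold Rabs; destruct Rcase_abs; lra).
    assert (Rabs (dweight n x p) * (if x n then p else 1 - p) <=
            INR n / (p * (1 - p)) * weight n x p * (if x n then p else 1 - p)).
    { apply Rmult_le_compat_r; lra. }
    unfold Rdiv in *. 
    assert (weight n x p * 1 <= weight n x p * (/ (p * (1 - p)) * (if x n then p else 1 - p))).
    { apply Rmult_le_compat_l; lra. }
    nra.
Qed.

Lemma Rinf_spec (E : R -> Prop) : (exists s, E s) -> (forall s, E s -> 0 <= s) ->
  (forall s, E s -> Rinf E <= s) /\ (forall l, (forall s, E s -> l <= s) -> l <= Rinf E).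
Proof.
  intros [s0 Hs0] Hpos. unfold Rinf.
  destruct excluded_middle_informative as [H|H].
  - destruct (completeness _ (proj1 H) (proj2 H)) as [m [Hub Hl]]. simpl. split.
    + intros s Hs. assert (-s <= m) by (apply Hub; rewrite Ropp_involutive; auto). lra.
    + intros l Hl'. assert (m <= -l). { apply Hl. intros y Hy. specialize (Hl' _ Hy). lra. } lra.
  - exfalso. apply H. split.
    + exists 0. intros y Hy. specialize (Hpos _ Hy). lra.
    + exists (- s0). rewrite Ropp_involutive; auto.
Qed.

Lemma sum_nonneg f N : (forall k, 0 <= f k) -> 0 <= sum_f_R0 f N.
Proof. intros H; induction N; simpl; [apply H| specialize (H (S N)); lra]. Qed.

Lemma Un_cv_nonneg u l : (forall n, 0 <= u n) -> Un_cv u l -> 0 <= l.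
Proof.
  intros H Hc. destruct (Rle_lt_dec 0 l) as [|Hl]; auto.
  destruct (Hc (- l)) as [N HN]; [lra|]. specialize (HN N (le_n _)). specialize (H N).
  unfold Rdist in HN. unfold Rabs in HN; destruct Rcase_abs in HN; lra.
Qed.

Lemma cover_values_nonneg n A s : cover_values n A s -> 0 <= s.
Proof.
  intros (c & a & b & Hab & _ & Hcv). eapply Un_cv_nonneg; [|exact Hcv].
  intros N; apply sum_nonneg. intros k; destruct (c k); [|lra].
  apply prodR_nonneg. intros i _. specialize (Hab k i); lra.
Qed.

Lemma cover_values_ne n A : exists s, cover_values n A s.
Proof.
  exists 1. exists (fun k => Nat.eqb k 0), (fun _ _ => 0), (fun _ _ => 1). split; [|split].
  - intros; lra.
  - intros u Hu _. exists 0%nat. split; auto. intros i Hi; specialize (Hu i Hi); lra.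
  - assert (E : forall N, sum_f_R0 (fun k => if Nat.eqb k 0 then box_vol n (fun _ => 0) (fun _ => 1) else 0) N = 1).
    { induction N; simpl. unfold box_vol. transitivity (prodR n (fun _ => 1)); [apply prodR_ext; intros; ring | apply prodR_one].
      rewrite IHN; ring. }
    intros eps He. exists 0%nat. intros m _. rewrite E. unfold Rdist. rewrite Rminus_diag, Rabs_R0; auto.
Qed.

Lemma leb_spec n A : (forall s, cover_values n A s -> leb_measure n A <= s) /\
  (forall l, (forall s, cover_values n A s -> l <= s) -> l <= leb_measure n A).
Proof. apply Rinf_spec; [apply cover_values_ne | apply cover_values_nonneg]. Qed.

Lemma leb_nonneg n A : 0 <= leb_measure n A.
Proof. apply (proj2 (leb_spec n A)). apply cover_values_nonneg. Qed.

Lemma leb_mono n (A B : (nat -> R) -> Prop) :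
  (forall u, in_unit_cube n u -> A u -> B u) -> leb_measure n A <= leb_measure n B.
Proof.
  intros HAB. apply (proj2 (leb_spec n B)). intros s Hs. apply (proj1 (leb_spec n A)).
  destruct Hs as (c & a & b & H1 & H2 & H3). exists c, a, b. split; [|split]; auto.
Qed.

Lemma leb_ext n (A B : (nat -> R) -> Prop) :
  (forall u, in_unit_cube n u -> (A u <-> B u)) -> leb_measure n A = leb_measure n B.
Proof.
  intros H; apply Rle_antisym; apply leb_mono; intros u Hu; apply H; auto.
Qed.

Lemma Un_cv_ext u v l : (forall n, u n = v n) -> Un_cv u l -> Un_cv v l.
Proof. intros E H eps He. destruct (H eps He) as [N HN]. exists N. intros; rewrite <- E; auto. Qed.

Lemma leb_dim n (B : (nat -> R) -> Prop) : leb_measure (S n) B <= leb_measure n B.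
Proof.
  apply (proj2 (leb_spec n B)). intros s Hs. apply (proj1 (leb_spec (S n) B)).
  destruct Hs as (c & a & b & H1 & H2 & H3).
  exists c, (fun k i => if Nat.eqb i n then 0 else a k i), (fun k i => if Nat.eqb i n then 1 else b k i).
  split; [|split].
  - intros k i; destruct (Nat.eqb i n); [lra | apply H1].
  - intros u Hu Bu. destruct (H2 u) as [k [Hk Hc]]; auto.
    { intros i Hi; apply Hu; lia. }
    exists k; split; auto. intros i Hi. destruct (Nat.eqb_spec i n).
    + subst; specialize (Hu n Hi); lra.
    + apply Hc; lia.
  - eapply Un_cv_ext; [|exact H3]. intros N. apply sum_eq. intros k _.
    destruct (c k); auto. unfold box_vol. simpl. rewrite Nat.eqb_refl.
    rewrite Rminus_0_r, Rmult_1_r. apply prodR_ext. intros i Hi.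
    destruct (Nat.eqb_spec i n); [lia|auto].
Qed.

Lemma weight_ext n x x' p : (forall i, (i < n)%nat -> x i = x' i) -> weight n x p = weight n x' p.
Proof. intros H; unfold weight; apply prodR_ext; intros i Hi; rewrite H; auto. Qed.

Lemma bits_low k m : (k < 2 ^ m)%nat -> bits k m = false.
Proof. intros H. unfold bits. apply (Nat.testbit_unique k m false k 0); auto; simpl; lia. Qed.

Lemma bits_high k m : (k < 2 ^ m)%nat -> bits (2 ^ m + k) m = true.
Proof. intros H. unfold bits. apply (Nat.testbit_unique _ m true k 0); auto; simpl; lia. Qed.

Lemma bits_shift k m i : (k < 2 ^ m)%nat -> (i < m)%nat -> bits (2 ^ m + k) i = bits k i.
Proof.
  intros H Hi. unfold bits. rewrite <- (Nat.mod_pow2_bits_low _ m i Hi).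
  f_equal. replace (2^m + k)%nat with (k + 1 * 2^m)%nat by lia.
  rewrite Nat.Div0.mod_add. apply Nat.mod_small; auto.
Qed.

Lemma sum_bits_S m p (H : (nat -> bool) -> R) :
  (forall x x', (forall i, (i < m)%nat -> x i = x' i) -> H x = H x') ->
  sum_bits (S m) (fun x => weight (S m) x p * H x) = sum_bits m (fun x => weight m x p * H x).
Proof.
  intros HH. unfold sum_bits.
  assert (HN : (1 <= 2 ^ m)%nat) by (pose proof (Nat.pow_nonzero 2 m); lia).
  assert (E2 : (2 ^ S m = 2 ^ m + 2 ^ m)%nat) by (simpl; lia).
  rewrite (tech2 _ (2 ^ m - 1) (2 ^ S m - 1)) by lia.
  replace (2 ^ S m - 1 - S (2 ^ m - 1))%nat with (2 ^ m - 1)%nat by lia.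
  match goal with |- sum_f_R0 ?f1 _ + sum_f_R0 ?f2 _ = _ =>
    rewrite (sum_eq f1 (fun k => (weight m (bits k) p * H (bits k)) * (1 - p)));
    [rewrite (sum_eq f2 (fun k => (weight m (bits k) p * H (bits k)) * p))|] end.
  - rewrite <- plus_sum. apply sum_eq. intros; ring.
  - intros k Hk. replace (S (2 ^ m - 1) + k)%nat with (2 ^ m + k)%nat by lia.
      cbv beta. rewrite weight_S, bits_high by lia.
      rewrite (weight_ext m (bits (2 ^ m + k)) (bits k)) by (intros; apply bits_shift; lia).
      rewrite (HH (bits (2 ^ m + k)) (bits k)) by (intros; apply bits_shift; lia). ring.
  - intros k Hk. cbv beta. rewrite weight_S. rewrite bits_low by lia. ring.
Qed.

Definition dphi (tau gamma : nat -> (nat -> bool) -> (nat -> R) -> bool) (n : nat) (p : R) : R :=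
  sum_bits n (fun x => dweight n x p *
    leb_measure n ((fun x u => stops_at tau n x u /\ gamma n x u = true) x)).

Lemma sum_deriv n (c : nat -> R) N p :
  derivable_pt_lim (fun p => sum_f_R0 (fun k => weight n (bits k) p * c k) N) p
    (sum_f_R0 (fun k => dweight n (bits k) p * c k) N).
Proof.
  induction N; simpl.
  - apply derivable_pt_lim_ext with (f := mult_fct (weight n (bits 0)) (fct_cte (c 0%nat))).
    { intros; reflexivity. }
    replace (dweight n (bits 0) p * c 0%nat) with
      (dweight n (bits 0) p * fct_cte (c 0%nat) p + weight n (bits 0) p * 0)
      by (unfold fct_cte; ring).
    apply derivable_pt_lim_mult; [apply dweight_lim | apply derivable_pt_lim_const].
  - apply derivable_pt_lim_ext with
      (f := plus_fct (fun p => sum_f_R0 (fun k => weight n (bits k) p * c k) N)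
                     (mult_fct (weight n (bits (S N))) (fct_cte (c (S N))))).
    { intros; reflexivity. }
    apply derivable_pt_lim_plus; auto.
    replace (dweight n (bits (S N)) p * c (S N)) with
      (dweight n (bits (S N)) p * fct_cte (c (S N)) p + weight n (bits (S N)) p * 0)
      by (unfold fct_cte; ring).
    apply derivable_pt_lim_mult; [apply dweight_lim | apply derivable_pt_lim_const].
Qed.

Lemma phi_deriv tau gamma n p : derivable_pt_lim (phi tau gamma n) p (dphi tau gamma n p).
Proof.
  unfold phi, dphi, prob, sum_bits.
  apply (sum_deriv n (fun k => leb_measure n (fun u => stops_at tau n (bits k) u /\ gamma n (bits k) u = true))).
Qed.

Lemma tail_nonneg tau n p : 0 < p < 1 -> 0 <= tail tau n p.
Proof.
  intros Hp. unfold tail, prob, sum_bits. apply sum_nonneg. intros k.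
  apply Rmult_le_pos; [apply weight_nonneg; auto | apply leb_nonneg].
Qed.

Lemma dphi_bound tau gamma m p : causal tau -> 0 < p < 1 ->
  Rabs (dphi tau gamma (S m) p) <= INR (S m) / (p * (1 - p)) * tail tau m p.
Proof.
  intros Hc Hp. unfold dphi, tail, prob.
  set (T := fun x => leb_measure m (fun u => forall j, (1 <= j <= m)%nat -> tau j x u = false)).
  replace (sum_bits m _) with (sum_bits m (fun x => weight m x p * T x)) by reflexivity.
  rewrite <- (sum_bits_S m p T).
  2:{ intros x x' Hx. unfold T. apply leb_ext. intros u _.
      split; intros H j Hj; rewrite <- (H j Hj); apply Hc; intros; split; auto;
      [symmetry|]; apply Hx; lia. }
  unfold sum_bits. eapply Rle_trans; [apply Rsum_abs|].
  rewrite scal_sum. apply sum_Rle. intros k _.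
  rewrite Rabs_mult. rewrite (Rabs_pos_eq (leb_measure _ _)) by apply leb_nonneg.
  pose proof (dweight_bound (S m) (bits k) p Hp) as Hd.
  pose proof (weight_pos (S m) (bits k) p Hp) as Hw.
  assert (HL : leb_measure (S m) (fun u => stops_at tau (S m) (bits k) u /\ gamma (S m) (bits k) u = true)
               <= T (bits k)).
  { eapply Rle_trans; [|apply leb_dim]. apply leb_mono. intros u _ [[H1 _] _] j Hj. apply H1; lia. }
  pose proof (leb_nonneg (S m) (fun u => stops_at tau (S m) (bits k) u /\ gamma (S m) (bits k) u = true)).
  assert (0 <= INR (S m) / (p * (1 - p))).
  { apply Rmult_le_pos; [apply pos_INR | apply Rlt_le, Rinv_0_lt_compat; nra]. }
  eapply Rle_trans; [apply Rmult_le_compat_r; [assumption | exact Hd]|].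
  cbv beta. rewrite Rmult_assoc. rewrite (Rmult_comm _ (INR (S m) / _)).
  apply Rmult_le_compat_l; auto. apply Rmult_le_compat_l; lra.
Qed.

Lemma weight_ratio n x q p0 r : 0 < q < 1 -> 0 < p0 < 1 -> q <= r * p0 -> 1 - q <= r * (1 - p0) ->
  weight n x q <= r ^ n * weight n x p0.
Proof.
  intros Hq Hp H1 H2. induction n; [unfold weight; simpl; lra|]. simpl pow.
  rewrite !weight_S.
  pose proof (weight_pos n x q Hq). pose proof (weight_pos n x p0 Hp).
  replace (r * r ^ n * (weight n x p0 * (if x n then p0 else 1 - p0))) with
    ((r ^ n * weight n x p0) * (r * (if x n then p0 else 1 - p0))) by ring.
  apply Rmult_le_compat; try lra; destruct (x n); lra.
Qed.

Lemma tail_ratio tau n q p0 r : 0 < q < 1 -> 0 < p0 < 1 -> q <= r * p0 -> 1 - q <= r * (1 - p0) ->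
  tail tau n q <= r ^ n * tail tau n p0.
Proof.
  intros Hq Hp H1 H2. unfold tail, prob, sum_bits. rewrite scal_sum. apply sum_Rle. intros k _.
  pose proof (leb_nonneg n (fun u => forall j, (1 <= j <= n)%nat -> tau j (bits k) u = false)).
  pose proof (weight_ratio n (bits k) q p0 r Hq Hp H1 H2).
  cbv beta. rewrite (Rmult_comm _ (r ^ n)), <- Rmult_assoc. apply Rmult_le_compat_r; auto.
Qed.

Lemma local_bound tau p0 A beta : 0 < p0 < 1 -> A > 0 -> beta < 1 ->
  (forall n, tail tau n p0 <= A * beta ^ n) ->
  exists d C rho, 0 < d /\ 0 <= C /\ 0 <= rho < 1 /\
    forall q, 0 < q < 1 -> Rabs (q - p0) < d -> forall n, tail tau n q <= C * rho ^ n.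
Proof.
  intros Hp HA Hb Ht.
  assert (Hb0 : 0 <= beta).
  { pose proof (Ht 1%nat). pose proof (tail_nonneg tau 1 p0 Hp). simpl in *. nra. }
  set (b := Rmax beta (1/2)).
  assert (Hb1 : beta <= b) by apply Rmax_l.
  assert (Hb2 : 1/2 <= b) by apply Rmax_r.
  assert (Hb3 : b < 1) by (unfold b; apply Rmax_lub_lt; lra).
  set (rho := (1 + b) / 2).
  set (r := rho / b).
  assert (Hr : 1 < r). { unfold r, rho. apply (Rmult_lt_reg_r b); [lra|]. field_simplify; lra. }
  assert (Hrb : r * b = rho) by (unfold r; field; lra).
  set (m := Rmin p0 (1 - p0)).
  assert (Hm1 : m <= p0) by apply Rmin_l. assert (Hm2 : m <= 1 - p0) by apply Rmin_r.
  assert (Hm0 : 0 < m) by (unfold m; apply Rmin_glb_lt; lra).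
  exists (m * (r - 1)), A, rho. split; [nra|]. split; [lra|]. split; [unfold rho; lra|].
  intros q Hq Hd n.
  assert (Hqd : - (m * (r-1)) < q - p0 < m * (r-1)).
  { unfold Rabs in Hd; destruct Rcase_abs in Hd; lra. }
  eapply Rle_trans; [apply (tail_ratio tau n q p0 r); auto; nra|].
  eapply Rle_trans; [apply Rmult_le_compat_l; [apply pow_le; lra | apply Ht]|].
  rewrite <- Hrb, Rpow_mult_distr.
  replace (r ^ n * (A * beta ^ n)) with (A * (r ^ n * beta ^ n)) by ring.
  replace (A * (r ^ n * b ^ n)) with (A * (r ^ n * b ^ n)) by ring.
  apply Rmult_le_compat_l; [lra|]. apply Rmult_le_compat_l; [apply pow_le; lra|].
  apply pow_incr; lra.
Qed.

Lemma compact_unif a b (G : R -> R -> R -> Prop)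
 (mono : forall C rho C' rho' q, G C rho q -> 0 <= C -> 0 <= rho -> C <= C' -> rho <= rho' -> G C' rho' q)
 (loc : forall x, a <= x <= b -> exists d C rho, 0 < d /\ 0 <= C /\ 0 <= rho < 1 /\
     forall y, a <= y <= b -> Rabs (y - x) < d -> G C rho y) :
 exists C rho, 0 <= C /\ 0 <= rho < 1 /\ forall y, a <= y <= b -> G C rho y.
Proof.
  set (P := fun x d => 0 < d /\ exists C rho, 0 <= C /\ 0 <= rho < 1 /\
     forall y, a <= y <= b -> Rabs (y - x) < d -> G C rho y).
  set (dsel := fun x => epsilon (inhabits 0) (P x)).
  assert (Hsel : forall x, a <= x <= b -> P x (dsel x)).
  { intros x Hx. apply epsilon_spec. destruct (loc x Hx) as (d & C & rho & H1 & H2 & H3 & H4).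
    exists d. split; auto. exists C, rho; auto. }
  assert (Hc : forall x : R, (exists y, (fun x y => a <= x <= b /\ Rabs (y - x) < dsel x) x y) ->
     (fun x => a <= x <= b) x).
  { intros x [y [H _]]; exact H. }
  set (fam := mkfamily (fun x => a <= x <= b) (fun x y => a <= x <= b /\ Rabs (y - x) < dsel x) Hc).
  destruct (compact_P3 a b fam) as [D [Hcov [l Hl]]].
  { split.
    - intros y Hy. exists y. simpl. split; auto. rewrite Rminus_diag, Rabs_R0. apply Hsel; auto.
    - intros x y [Hx Hy]. simpl in Hy.
      assert (Hpos : 0 < dsel x - Rabs (y - x)) by lra.
      exists (mkposreal _ Hpos). intros z Hz. unfold disc in Hz; simpl in Hz. split; auto.
      replace (z - x) with ((z - y) + (y - x)) by ring.
      eapply Rle_lt_trans; [apply Rabs_triang|]. lra. }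
  assert (Hind : forall l', (forall x, List.In x l' -> a <= x <= b) -> exists C rho, 0 <= C /\ 0 <= rho < 1 /\
     forall x, List.In x l' -> forall y, a <= y <= b -> Rabs (y - x) < dsel x -> G C rho y).
  { induction l' as [|x l' IH]; intros Hin.
    - exists 0, 0. split; [lra|split; [lra|]]. intros x [].
    - destruct IH as (C2 & r2 & HC2 & Hr2 & H2). { intros; apply Hin; right; auto. }
      destruct (Hsel x) as [_ (C1 & r1 & HC1 & Hr1 & H1)]. { apply Hin; left; auto. }
      exists (Rmax C1 C2), (Rmax r1 r2). split; [|split].
      + eapply Rle_trans; [exact HC1| apply Rmax_l].
      + split; [eapply Rle_trans; [apply Hr1| apply Rmax_l]|]. apply Rmax_lub_lt; lra.
      + intros x' [<-|Hx'] y Hy Hd.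
        * eapply mono; [apply H1; auto | lra | lra | apply Rmax_l | apply Rmax_l].
        * eapply mono; [apply (H2 x'); auto | lra | lra | apply Rmax_r | apply Rmax_r]. }
  destruct (Hind l) as (C & rho & HC & Hr & H). { intros x Hx. apply Hl in Hx. destruct Hx; auto. }
  exists C, rho. split; auto. split; auto. intros y Hy.
  destruct (Hcov y Hy) as [x [[Hx Hd] HD]]. apply (H x); auto. apply Hl. split; auto.
Qed.

Lemma series_cv rho : 0 < rho < 1 ->
  {l | Un_cv (fun N => sum_f_R0 (fun k => INR (S k) * rho ^ k) N) l}.
Proof.
  intros Hr. apply (Alembert_C4 _ rho); [lra| |].
  - intros n. apply Rmult_lt_0_compat; [apply lt_0_INR; lia | apply pow_lt; lra].
  - intros eps He. destruct (INR_archimed eps rho He) as [N HN]. exists N.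
    intros n Hn. unfold Rdist.
    assert (HS : 0 < INR (S n)) by (apply lt_0_INR; lia).
    assert (HNn : INR N <= INR (S n)) by (apply le_INR; lia).
    replace (INR (S (S n)) * rho ^ S n / (INR (S n) * rho ^ n)) with (rho + rho / INR (S n)).
    2:{ rewrite (S_INR (S n)). simpl pow. field. split; [apply pow_nonzero; lra | lra]. }
    assert (H0 : 0 < rho / INR (S n)) by (apply Rdiv_lt_0_compat; lra).
    rewrite (Rabs_pos_eq (rho + rho / INR (S n))) by lra.
    replace (rho + rho / INR (S n) - rho) with (rho / INR (S n)) by ring.
    rewrite Rabs_pos_eq by lra.
    apply (Rmult_lt_reg_r (INR (S n))); auto. unfold Rdiv. rewrite Rmult_assoc, Rinv_l by lra.
    nra.
Qed.

Lemma uniform_tail tau (S : R -> Prop) zeta eta : causal tau -> fast S tau ->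
  (forall p, S p -> 0 < p < 1) -> (forall p, zeta <= p <= eta -> S p) ->
  exists C rho, 0 <= C /\ 0 <= rho < 1 /\ forall q, zeta <= q <= eta -> forall n, tail tau n q <= C * rho ^ n.
Proof.
  intros Hc Hf Hr Hs.
  apply (compact_unif zeta eta (fun C rho q => forall n, tail tau n q <= C * rho ^ n)).
  - intros C rho C' rho' q H HC Hr0 HC' Hr' n. eapply Rle_trans; [apply H|].
    apply Rmult_le_compat; auto; try (apply pow_le; lra); apply pow_incr; lra.
  - intros x Hx. destruct (Hf x (Hs x Hx)) as (A & beta & HA & Hb & Ht).
    destruct (local_bound tau x A beta (Hr x (Hs x Hx)) HA Hb Ht) as (d & C & rho & Hd & HC & Hrho & H).
    exists d, C, rho. split; [auto|split; [auto|split; [auto|]]]. intros y Hy Hyd. apply H; auto.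
Qed.

Theorem lemma1 (S : R -> Prop) (f : R -> R)
  (tau gamma : nat -> (nat -> bool) -> (nat -> R) -> bool) :
  open_set S ->
  (forall p, S p -> 0 < p < 1) ->
  (forall p, S p -> 0 < f p < 1) ->
  (forall p, S p -> exists l, derivable_pt_lim f p l) ->
  bernoulli_factory S f tau gamma ->
  fast S tau ->
  (forall n p, (1 <= n)%nat -> S p -> exists l, derivable_pt_lim (phi tau gamma n) p l) /\
  (exists dphi : nat -> R -> R,
     (forall n p, (1 <= n)%nat -> S p -> derivable_pt_lim (phi tau gamma n) p (dphi n p)) /\
     forall zeta eta, zeta <= eta -> (forall p, zeta <= p <= eta -> S p) ->
       exists g : R -> R, forall eps, eps > 0 -> exists M : nat,
         forall m p, (M <= m)%nat -> zeta <= p <= eta ->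
           Rabs (sum_f_R0 (fun k => dphi (Datatypes.S k) p) m - g p) < eps).
Proof.
  intros Hopen Hrange Hfr Hfd [Hct _] Hfast.
  split.
  { intros n p _ _. exists (dphi tau gamma n p). apply phi_deriv. }
  exists (dphi tau gamma). split.
  { intros n p _ _. apply phi_deriv. }
  intros zeta eta Hze Hsub.
  pose proof (Hrange zeta (Hsub zeta ltac:(lra))) as Hz.
  pose proof (Hrange eta (Hsub eta ltac:(lra))) as He.
  destruct (uniform_tail tau S zeta eta Hct Hfast Hrange Hsub) as (C & rho & HC & Hrho & Ht).
  set (rho' := Rmax rho (1/2)).
  assert (Hr1 : rho <= rho') by apply Rmax_l.
  assert (Hr2 : 0 < rho' < 1) by (split; [eapply Rlt_le_trans; [|apply Rmax_r]; lra | apply Rmax_lub_lt; lra]).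
  set (K := C / (zeta * (1 - eta))).
  assert (HK : 0 <= K) by (apply Rmult_le_pos; [lra | apply Rlt_le, Rinv_0_lt_compat; nra]).
  set (Bn := fun k => K * (INR (Datatypes.S k) * rho' ^ k)).
  set (clamp := fun y => Rmax zeta (Rmin eta y)).
  assert (Hcl : forall y, zeta <= clamp y <= eta).
  { intros y. unfold clamp. split; [apply Rmax_l|]. apply Rmax_lub; [lra | apply Rmin_l]. }
  assert (Hcl2 : forall y, zeta <= y <= eta -> clamp y = y).
  { intros y Hy. unfold clamp. rewrite Rmin_right by lra. rewrite Rmax_right; lra. }
  set (fn := fun k y => dphi tau gamma (Datatypes.S k) (clamp y)).
  assert (Hbd : forall k y, Rabs (fn k y) <= Bn k).
  { intros k y. unfold fn, Bn. set (q := clamp y). pose proof (Hcl y) as Hq. fold q in Hq.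
    assert (Hq01 : 0 < q < 1) by lra.
    eapply Rle_trans; [apply dphi_bound; auto|].
    assert (Hpq : zeta * (1 - eta) <= q * (1 - q)) by (apply Rmult_le_compat; lra).
    assert (Hinv : / (q * (1 - q)) <= / (zeta * (1 - eta))) by (apply Rinv_le_contravar; nra).
    pose proof (Ht q Hq k) as Htk. pose proof (tail_nonneg tau k q Hq01).
    assert (Hpow : C * rho ^ k <= C * rho' ^ k) by (apply Rmult_le_compat_l; [lra | apply pow_incr; lra]).
    pose proof (pos_INR (Datatypes.S k)).
    assert (0 <= / (q * (1 - q))) by (apply Rlt_le, Rinv_0_lt_compat; nra).
    unfold K, Rdiv.
    replace (C * / (zeta * (1 - eta)) * (INR (Datatypes.S k) * rho' ^ k)) with
      (INR (Datatypes.S k) * / (zeta * (1 - eta)) * (C * rho' ^ k)) by ring.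
    apply Rmult_le_compat.
    - apply Rmult_le_pos; auto.
    - auto.
    - apply Rmult_le_compat_l; auto.
    - lra. }
  destruct (series_cv rho' Hr2) as [l0 Hl0].
  assert (X : CVN_R fn).
  { intros r. exists Bn. exists (K * l0). split.
    - apply Un_cv_ext with (u := fun N => K * sum_f_R0 (fun k => INR (Datatypes.S k) * rho' ^ k) N).
      + intros N. rewrite scal_sum. apply sum_eq. intros i _. unfold Bn.
        rewrite Rabs_pos_eq; [ring|]. apply Rmult_le_pos; auto.
        apply Rmult_le_pos; [apply pos_INR | apply pow_le; lra].
      + apply (CV_mult (fun _ => K)); auto. intros eps Heps. exists 0%nat. intros.
        unfold Rdist. rewrite Rminus_diag, Rabs_R0; auto.
    - intros n y _; apply Hbd. }
  set (cv := CVN_R_CVS fn X).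
  exists (SFL fn cv).
  intros eps Heps.
  assert (Hrpos : 0 < Rabs zeta + Rabs eta + 1) by (pose proof (Rabs_pos zeta); pose proof (Rabs_pos eta); lra).
  destruct (CVN_CVU fn cv (mkposreal _ Hrpos) (X _) eps Heps) as [N HN].
  exists N. intros m p Hm Hp.
  specialize (HN m p Hm).
  unfold SP in HN. rewrite Rabs_minus_sym.
  replace (sum_f_R0 (fun k => dphi tau gamma (Datatypes.S k) p) m) with (sum_f_R0 (fun k => fn k p) m).
  2:{ apply sum_eq. intros; unfold fn; rewrite Hcl2; auto. }
  apply HN. unfold Boule. simpl. rewrite Rminus_0_r.
  unfold Rabs at 1. destruct Rcase_abs; unfold Rabs; repeat destruct Rcase_abs; lra.
Qed.
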